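(* Let the Markov jump process on the finite set $K$ with rates $W$ be irreducible with stationary distribution $\rho$, let $V:K\to\mathbb{R}$ and $b\in\mathbb{R}$. For small $h\in\mathbb{R}$ let $\mu=\mu_h$ be the stationary distribution of the perturbed dynamics with rates $W(x,y)e^{\frac{bh}{2}[V(y)-V(x)]}$. Then the dynamical fluctuation functional satisfies, as $h\to0$, \[ I(\mu)=-\frac{bh}{4}\sum_x\mu(x)\,LV(x)+o(h^2). \]
   Context: $W(x,y)\ge0$ are transition rates with backward generator $Lf(x)=\sum_yW(x,y)[f(y)-f(x)]$. For a probability distribution $\mu$ on $K$, the (Donsker–Varadhan) dynamical fluctuation functional of the occupation-time empirical distribution is $I(\mu)=-\inf_{g>0}\sum_x\mu(x)\frac{Lg(x)}{g(x)}$, the infimum over strictly positive functions $g:K\to\mathbb{R}$. *)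

(* Defs.v *)
From Stdlib Require Import Reals Lra List Relations ClassicalEpsilon.
Open Scope R_scope.

Definition sumK (n : nat) (f : nat -> R) : R :=
  fold_right Rplus 0 (map f (seq 0 n)).

Definition gen (n : nat) (W : nat -> nat -> R) (f : nat -> R) (x : nat) : R :=
  sumK n (fun y => W x y * (f y - f x)).

Definition rates (n : nat) (W : nat -> nat -> R) : Prop :=
  forall x y, (x < n)%nat -> (y < n)%nat -> 0 <= W x y.

Definition jump (n : nat) (W : nat -> nat -> R) (x y : nat) : Prop :=
  (x < n)%nat /\ (y < n)%nat /\ 0 < W x y.

Definition irreducible (n : nat) (W : nat -> nat -> R) : Prop :=
  forall x y, (x < n)%nat -> (y < n)%nat -> x <> y ->
    clos_trans nat (jump n W) x y.

Definition distribution (n : nat) (mu : nat -> R) : Prop :=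
  (forall x, (x < n)%nat -> 0 <= mu x) /\ sumK n mu = 1.

Definition stationary (n : nat) (W : nat -> nat -> R) (mu : nat -> R) : Prop :=
  distribution n mu /\ forall f : nat -> R, sumK n (fun x => mu x * gen n W f x) = 0.

Definition DVset (n : nat) (W : nat -> nat -> R) (mu : nat -> R) (r : R) : Prop :=
  exists g : nat -> R, (forall x, (x < n)%nat -> 0 < g x) /\
    r = - sumK n (fun x => mu x * gen n W g x / g x).

(* Donsker-Varadhan functional I(mu) = - inf_{g>0} sum_x mu(x) Lg(x)/g(x),
   i.e. the least upper bound of DVset (chosen by classical description). *)
Definition DVI (n : nat) (W : nat -> nat -> R) (mu : nat -> R) : R :=
  epsilon (inhabits 0) (fun v => is_lub (DVset n W mu) v).

Definition pert (W : nat -> nat -> R) (V : nat -> R) (b h : R) (x y : nat) : R :=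
  W x y * exp (b * h / 2 * (V y - V x)).

(* Main.v *)
Require Import Defs.
From Stdlib Require Import Reals Lra Lia List ClassicalEpsilon.
Open Scope R_scope.

Definition sL (l : list nat) (f : nat -> R) := fold_right Rplus 0 (map f l).

Lemma sL_ext l f g : (forall x, In x l -> f x = g x) -> sL l f = sL l g.
Proof. induction l; simpl; intros H; unfold sL in *; simpl; auto.
rewrite H by auto. rewrite IHl; auto. Qed.

Lemma sL_plus l f g : sL l (fun x => f x + g x) = sL l f + sL l g.
Proof. induction l; unfold sL in *; simpl; [lra|]. rewrite IHl; lra. Qed.

Lemma sL_scal l c f : sL l (fun x => c * f x) = c * sL l f.
Proof. induction l; unfold sL in *; simpl; [lra|]. rewrite IHl; lra. Qed.

Lemma sL_le l f g : (forall x, In x l -> f x <= g x) -> sL l f <= sL l g.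
Proof. induction l; unfold sL in *; simpl; intros H; [lra|].
assert (f a <= g a) by auto. assert (fold_right Rplus 0 (map f l) <= fold_right Rplus 0 (map g l)) by auto. lra. Qed.

Lemma sL_abs l f : Rabs (sL l f) <= sL l (fun x => Rabs (f x)).
Proof. induction l; unfold sL in *; simpl. rewrite Rabs_R0; lra.
eapply Rle_trans. apply Rabs_triang. lra. Qed.

Lemma sL_nonneg l f : (forall x, In x l -> 0 <= f x) -> 0 <= sL l f.
Proof. intros H. replace 0 with (sL l (fun _ => 0)). apply sL_le; auto.
induction l; unfold sL in *; simpl; auto. rewrite IHl; [lra|]. intros; apply H; simpl; auto. Qed.

Lemma sL_term l f y : (forall x, In x l -> 0 <= f x) -> In y l -> f y <= sL l f.
Proof. induction l; simpl; intros H Hy; [contradiction|]. unfold sL in *; simpl.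
destruct Hy as [<-|Hy].
- assert (0 <= fold_right Rplus 0 (map f l)) by (apply (sL_nonneg l f); auto). lra.
- assert (0 <= f a) by auto. assert (f y <= fold_right Rplus 0 (map f l)) by auto. lra. Qed.

Lemma sumK_sL n f : sumK n f = sL (seq 0 n) f.
Proof. reflexivity. Qed.

Lemma inK n x : In x (seq 0 n) <-> (x < n)%nat.
Proof. rewrite in_seq. split; intros; lia || lia. Qed.

Lemma lim_eq f x l l' : derivable_pt_lim f x l -> l = l' -> derivable_pt_lim f x l'.
Proof. intros H ->; exact H. Qed.

Lemma lim_affine c d x : derivable_pt_lim (fun t => c + d * t) x d.
Proof.
change (fun t => c + d * t) with (plus_fct (fct_cte c) (mult_real_fct d id)).
eapply lim_eq. apply derivable_pt_lim_plus. apply derivable_pt_lim_const.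
apply derivable_pt_lim_scal. apply derivable_pt_lim_id. lra. Qed.

Definition psi t := (1 + /2 * t) + exp t * (-1 + /2 * t).
Definition psi1 t := (/2 + 0 * t) + exp t * (- /2 + /2 * t).
Definition psi2 t := exp t * (/2 * t).

Lemma d_psi x : derivable_pt_lim psi x (psi1 x).
Proof.
change psi with (plus_fct (fun t => 1 + /2 * t) (mult_fct exp (fun t => -1 + /2 * t))).
eapply lim_eq. apply derivable_pt_lim_plus. apply lim_affine.
apply derivable_pt_lim_mult. apply derivable_pt_lim_exp. apply lim_affine.
unfold psi1. field. Qed.

Lemma d_psi1 x : derivable_pt_lim psi1 x (psi2 x).
Proof.
change psi1 with (plus_fct (fun t => /2 + 0 * t) (mult_fct exp (fun t => -/2 + /2 * t))).
eapply lim_eq. apply derivable_pt_lim_plus. apply lim_affine.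
apply derivable_pt_lim_mult. apply derivable_pt_lim_exp. apply lim_affine.
unfold psi2. field. Qed.

Lemma mvt_bound (g g' : R -> R) (K : R) (k : nat) : 0 <= K -> g 0 = 0 ->
  (forall c, derivable_pt_lim g c (g' c)) ->
  (forall c, Rabs c <= 1 -> Rabs (g' c) <= K * Rabs c ^ k) ->
  forall t, Rabs t <= 1 -> Rabs (g t) <= K * Rabs t ^ (S k).
Proof.
intros HK H0 Hd Hb t Ht.
destruct (Rtotal_order t 0) as [Hlt|[Heq|Hgt]].
- destruct (MVT_cor2 g g' t 0 Hlt (fun c _ => Hd c)) as [c [Hc Hci]].
  assert (Rabs c <= Rabs t) by (rewrite !Rabs_left; lra).
  assert (g t = - (g' c * (0 - t))) by lra. rewrite H1, Rabs_Ropp, Rabs_mult.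
  replace (0 - t) with (- t) by ring. rewrite Rabs_Ropp. simpl.
  assert (Rabs (g' c) <= K * Rabs c ^ k) by (apply Hb; lra).
  assert (Rabs c ^ k <= Rabs t ^ k) by (apply pow_incr; split; [apply Rabs_pos|lra]).
  assert (0 <= Rabs t) by apply Rabs_pos.
  assert (0 <= Rabs (g' c)) by apply Rabs_pos.
  apply Rle_trans with (K * Rabs t ^ k * Rabs t); [|lra].
  apply Rmult_le_compat_r; auto. eapply Rle_trans; [eauto|]. apply Rmult_le_compat_l; auto.
- subst. rewrite H0, Rabs_R0. simpl. lra.
- destruct (MVT_cor2 g g' 0 t Hgt (fun c _ => Hd c)) as [c [Hc Hci]].
  assert (Rabs c <= Rabs t) by (rewrite !Rabs_right; lra).
  assert (g t = (g' c * (t - 0))) by lra. rewrite H1, Rabs_mult.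
  replace (t - 0) with t by ring. simpl.
  assert (Rabs (g' c) <= K * Rabs c ^ k) by (apply Hb; rewrite Rabs_right in *; lra).
  assert (Rabs c ^ k <= Rabs t ^ k) by (apply pow_incr; split; [apply Rabs_pos|lra]).
  assert (0 <= Rabs t) by apply Rabs_pos.
  assert (0 <= Rabs (g' c)) by apply Rabs_pos.
  apply Rle_trans with (K * Rabs t ^ k * Rabs t); [|lra].
  apply Rmult_le_compat_r; auto. eapply Rle_trans; [eauto|]. apply Rmult_le_compat_l; auto.
Qed.

Lemma psi_bound t : Rabs t <= 1 -> Rabs (psi t) <= exp 1 * Rabs t ^ 3.
Proof.
intros Ht.
assert (He : 0 <= exp 1) by (left; apply exp_pos).
apply (mvt_bound psi psi1 (exp 1) 2); auto.
- unfold psi. rewrite exp_0. ring.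
- apply d_psi.
- apply (mvt_bound psi1 psi2 (exp 1) 1); auto.
  + unfold psi1. rewrite exp_0. ring.
  + apply d_psi1.
  + intros c Hc. unfold psi2. rewrite Rabs_mult, Rabs_mult.
    rewrite (Rabs_right (exp c)) by (left; apply exp_pos).
    rewrite (Rabs_right (/2)) by lra.
    assert (exp c <= exp 1). { assert (c <= 1) by (revert Hc; unfold Rabs; destruct (Rcase_abs c); lra). destruct (Req_dec c 1) as [->|]; [lra|]. left; apply exp_increasing; lra. }
    assert (0 <= Rabs c) by apply Rabs_pos. simpl.
    assert (0 < exp c) by apply exp_pos. nra.
Qed.

Lemma gen_div n W g x : 0 < g x ->
  gen n W g x / g x = sumK n (fun y => W x y * (g y / g x - 1)).
Proof.
intros Hg. unfold gen, Rdiv. rewrite Rmult_comm, !sumK_sL, <- sL_scal.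
apply sL_ext. intros. field. lra. Qed.

Lemma DVI_eq n W V c mu :
  rates n W -> distribution n mu ->
  (forall f, sumK n (fun x => mu x * sumK n (fun y => W x y * exp (c * (V y - V x)) * (f y - f x))) = 0) ->
  DVI n W mu = - sumK n (fun x => mu x * sumK n (fun y => W x y * (exp (c * (V y - V x)) - 1))).
Proof.
intros HW [Hmu _] Hst.
set (S := - sumK n (fun x => mu x * sumK n (fun y => W x y * (exp (c * (V y - V x)) - 1)))).
assert (Hin : DVset n W mu S).
{ exists (fun z => exp (c * V z)). split. intros; apply exp_pos.
  unfold S. f_equal. rewrite !sumK_sL. apply sL_ext. intros x Hx.
  unfold Rdiv. rewrite Rmult_assoc. fold (Rdiv (gen n W (fun z => exp (c * V z)) x) (exp (c * V x))).
  rewrite gen_div by apply exp_pos. f_equal. rewrite !sumK_sL. apply sL_ext. intros y Hy.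
  f_equal. f_equal. unfold Rdiv. rewrite <- exp_Ropp, <- exp_plus. f_equal. ring. }
assert (Hub : is_upper_bound (DVset n W mu) S).
{ intros r [g [Hg ->]]. unfold S. apply Ropp_le_contravar.
  set (w := fun z => ln (g z) - c * V z).
  rewrite <- (Rplus_0_r (sumK n (fun x => mu x * sumK n (fun y => W x y * (exp (c * (V y - V x)) - 1))))).
  rewrite <- (Hst w). rewrite !sumK_sL, <- sL_plus. apply sL_le. intros x Hx.
  apply inK in Hx.
  unfold Rdiv. rewrite Rmult_assoc. fold (Rdiv (gen n W g x) (g x)).
  rewrite gen_div by auto. rewrite <- Rmult_plus_distr_l. apply Rmult_le_compat_l; auto.
  rewrite !sumK_sL, <- sL_plus. apply sL_le. intros y Hy. apply inK in Hy.
  assert (Hq : g y / g x = exp (c * (V y - V x)) * exp (w y - w x)).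
  { rewrite <- exp_plus. unfold w. replace (c * (V y - V x) + (ln (g y) - c * V y - (ln (g x) - c * V x)))
      with (ln (g y) + - ln (g x)) by ring. rewrite exp_plus, exp_Ropp, !exp_ln by auto. reflexivity. }
  rewrite Hq. assert (H1 := exp_ineq1_le (w y - w x)). assert (H2 := exp_pos (c * (V y - V x))).
  assert (H3 := HW x y Hx Hy). 
  assert (exp (c * (V y - V x)) * (1 + (w y - w x)) <= exp (c * (V y - V x)) * exp (w y - w x)) by
    (apply Rmult_le_compat_l; lra).
  nra. }
assert (Hlub : is_lub (DVset n W mu) S).
{ split; [auto|intros b Hb; apply Hb; auto]. }
unfold DVI. destruct (epsilon_spec (inhabits 0) (fun v => is_lub (DVset n W mu) v) (ex_intro _ S Hlub)) as [H1 H2].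
set (e := epsilon _ _) in *. apply Rle_antisym. apply H2; auto. apply H1; auto.
Qed.

Lemma sL_lin3 l a1 a2 a3 f g k :
  sL l (fun y => a1 * f y + a2 * g y + a3 * k y) = a1 * sL l f + a2 * sL l g + a3 * sL l k.
Proof. rewrite !sL_plus, !sL_scal. reflexivity. Qed.

Theorem proposition3 (n : nat) (W : nat -> nat -> R) (V : nat -> R) (b : R)
  (mu : R -> nat -> R)
  (hW : rates n W) (hirr : irreducible n W)
  (hmu : exists h0, 0 < h0 /\
           forall h, Rabs h < h0 -> stationary n (pert W V b h) (mu h)) :
  forall eps, 0 < eps -> exists delta, 0 < delta /\
    forall h, 0 < Rabs h < delta ->
      Rabs (DVI n W (mu h)
            - (- (b * h / 4) * sumK n (fun x => mu h x * gen n W V x)))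
        <= eps * h ^ 2.
Proof.
intros eps Heps. destruct hmu as [h0 [Hh0 Hst]].
set (Q := sumK n (fun x => sumK n (fun y => W x y * (exp 1 * Rabs (b / 2 * (V y - V x)) ^ 3)))).
set (B := sumK n (fun x => sumK n (fun y => Rabs (b / 2 * (V y - V x)))) + 1).
assert (HQ : 0 <= Q).
{ unfold Q. rewrite sumK_sL. apply sL_nonneg. intros x Hx. rewrite sumK_sL. apply sL_nonneg.
  intros y Hy. apply inK in Hx; apply inK in Hy. apply Rmult_le_pos. apply hW; auto.
  apply Rmult_le_pos. left; apply exp_pos. apply pow_le, Rabs_pos. }
assert (HB0 : forall x y, (x < n)%nat -> (y < n)%nat -> Rabs (b / 2 * (V y - V x)) <= B - 1).
{ intros x y Hx Hy. unfold B. replace (_ + 1 - 1) with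
    (sumK n (fun x => sumK n (fun y => Rabs (b / 2 * (V y - V x))))) by ring.
  rewrite sumK_sL. eapply Rle_trans; [|apply (sL_term _ (fun x => sumK n (fun y => Rabs (b / 2 * (V y - V x)))) x)].
  - rewrite sumK_sL. apply (sL_term _ (fun y => Rabs (b / 2 * (V y - V x)))). intros; apply Rabs_pos. apply inK; auto.
  - intros; rewrite sumK_sL; apply sL_nonneg; intros; apply Rabs_pos.
  - apply inK; auto. }
assert (HB : 1 <= B).
{ unfold B. assert (0 <= sumK n (fun x => sumK n (fun y => Rabs (b / 2 * (V y - V x))))); [|lra].
  rewrite sumK_sL; apply sL_nonneg; intros; rewrite sumK_sL; apply sL_nonneg; intros; apply Rabs_pos. }
exists (Rmin h0 (Rmin (/ B) (eps / (Q + 1)))). split.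
{ apply Rmin_pos; auto. apply Rmin_pos. apply Rinv_0_lt_compat; lra. apply Rdiv_lt_0_compat; lra. }
intros h [Hh Hhd].
assert (Hh1 : Rabs h < h0) by (eapply Rlt_le_trans; [exact Hhd|apply Rmin_l]).
assert (Hh2 : Rabs h < / B) by (eapply Rlt_le_trans; [exact Hhd|eapply Rle_trans; [apply Rmin_r|apply Rmin_l]]).
assert (Hh3 : Rabs h < eps / (Q + 1)) by (eapply Rlt_le_trans; [exact Hhd|eapply Rle_trans; [apply Rmin_r|apply Rmin_r]]).
destruct (Hst h Hh1) as [[Hpos Hsum] Hstat].
set (m := mu h) in *. set (c := b * h / 2).
assert (Hstat' : forall f, sumK n (fun x => m x * sumK n (fun y => W x y * exp (c * (V y - V x)) * (f y - f x))) = 0)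
  by (intros f; exact (Hstat f)).
rewrite (DVI_eq n W V c m hW (conj Hpos Hsum) Hstat').
assert (Hm1 : forall x, (x < n)%nat -> m x <= 1).
{ intros x Hx. rewrite <- Hsum. rewrite sumK_sL. apply sL_term. intros; apply Hpos, inK; auto. apply inK; auto. }
assert (Hid : - sumK n (fun x => m x * sumK n (fun y => W x y * (exp (c * (V y - V x)) - 1)))
   - (- (b * h / 4) * sumK n (fun x => m x * gen n W V x))
   = sumK n (fun x => m x * sumK n (fun y => W x y * psi (c * (V y - V x))))).
{ assert (H0 := Hstat' V).
  transitivity (sumK n (fun x => (-1) * (m x * sumK n (fun y => W x y * (exp (c * (V y - V x)) - 1)))
     + (c / 2) * (m x * gen n W V x) + (c/2) * (m x * sumK n (fun y => W x y * exp (c * (V y - V x)) * (V y - V x))))).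
  { rewrite !sumK_sL, sL_lin3. rewrite <- !sumK_sL. rewrite H0. unfold c. set (X := sumK n (fun x => m x * gen n W V x)). set (Y := sumK n _). field. }
  rewrite !sumK_sL. apply sL_ext. intros x Hx.
  unfold gen. rewrite !sumK_sL.
  transitivity (m x * ((-1) * sL (seq 0 n) (fun y => W x y * (exp (c * (V y - V x)) - 1))
      + (c/2) * sL (seq 0 n) (fun y => W x y * (V y - V x))
      + (c/2) * sL (seq 0 n) (fun y => W x y * exp (c * (V y - V x)) * (V y - V x)))); [ring|].
  f_equal. rewrite <- sL_lin3. apply sL_ext. intros y Hy. unfold psi. clear -c. field. }
rewrite Hid. clear Hid.
assert (Hpt : forall x, (x < n)%nat ->
  Rabs (m x * sumK n (fun y => W x y * psi (c * (V y - V x))))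
  <= Rabs h ^ 3 * sumK n (fun y => W x y * (exp 1 * Rabs (b / 2 * (V y - V x)) ^ 3))).
{ intros x Hx. rewrite Rabs_mult, (Rabs_right (m x)) by (apply Rle_ge, Hpos; auto).
  rewrite !sumK_sL. eapply Rle_trans.
  apply Rmult_le_compat; [apply Hpos; auto|apply Rabs_pos|apply Hm1; auto|apply sL_abs].
  rewrite Rmult_1_l, <- sL_scal. apply sL_le. intros y Hy. apply inK in Hy.
  assert (HWxy := hW x y Hx Hy).
  rewrite Rabs_mult, (Rabs_right (W x y)) by lra.
  assert (Ht : c * (V y - V x) = h * (b / 2 * (V y - V x))) by (unfold c; field).
  rewrite Ht.
  assert (Hb1 := HB0 x y Hx Hy).
  assert (Hle : Rabs (h * (b / 2 * (V y - V x))) <= 1).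
  { rewrite Rabs_mult. assert (0 <= Rabs (b / 2 * (V y - V x))) by apply Rabs_pos.
    assert (Rabs h * B < 1). { apply (Rmult_lt_compat_r B) in Hh2; [|lra]. rewrite Rinv_l in Hh2; lra. }
    assert (0 <= Rabs h) by apply Rabs_pos. nra. }
  eapply Rle_trans. apply Rmult_le_compat_l; [lra|apply psi_bound; auto].
  rewrite Rabs_mult, Rpow_mult_distr. right; ring. }
eapply Rle_trans. rewrite sumK_sL. apply sL_abs.
eapply Rle_trans. apply sL_le. intros x Hx. apply Hpt. apply inK; auto.
rewrite sL_scal. rewrite <- sumK_sL. fold Q.
rewrite <- (pow2_abs h).
assert (0 <= Rabs h) by apply Rabs_pos.
assert (Rabs h * Q <= eps).
{ apply (Rmult_lt_compat_r (Q + 1)) in Hh3; [|lra]. unfold Rdiv in Hh3.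
  rewrite Rmult_assoc, Rinv_l in Hh3 by lra. nra. }
replace (Rabs h ^ 3 * Q) with ((Rabs h * Q) * Rabs h ^ 2) by ring.
apply Rmult_le_compat_r; [apply pow_le; auto|auto].
Qed.
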